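(* Let $I$ be a conserved interval of $\mathcal{P}$ with maximal frontier set $F_I=\{f_1<f_2<\cdots<f_k\}$, and let $(a..c)\subseteq I$ be a conserved interval. Then exactly one of the following holds: (1) some $f_l$ lies in $(a..c)$, and then there exist $i\leq j$ such that $(a..c)=(f_i..f_j)$; (2) $(a..c)$ contains no element of $F_I$, and then there exists $i$ such that $f_i<a\leq c<f_{i+1}$.
   Context: Let $n\geq 2$ and let $\mathcal{P}=\{P_1,\ldots,P_K\}$ be signed permutations of $\{1,\ldots,n\}$: each $P_k$ is an ordering of $1,\ldots,n$ in which each element carries a sign $+$ or $-$. Assume $P_1=(+1,+2,\ldots,+n)$ and that every $P_k$ has first element $+1$ and last element $+n$. For integers $i\leq j$ write $(i..j)=\{i,\ldots,j\}$. A conserved interval of $\mathcal{P}$ is either a singleton, or a set $(a..c)$ with $a<c$ which (ignoring signs) occupies consecutive positions in every $P_k$ and which, in every $P_k$, has either $+a$ at its left end and $+c$ at its right end, or $-c$ at its left end and $-a$ at its right end. For a conserved interval $I=(a..c)$, a set $\{f_1,\ldots,f_k\}$ with $a=f_1<\cdots<f_k=c$ is a set of frontiers of $I$ if $(f_i..f_j)$ is conserved for all $1\leq i<j\leq k$; $F_I$ denotes the unique inclusion-maximal set of frontiers of $I$ (the union of all sets of frontiers of $I$). *)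

(* Defs.v *)
From mathcomp Require Import all_boot all_order all_algebra.
Set Implicit Arguments. Unset Strict Implicit. Unset Printing Implicit Defensive.

(* A signed permutation of {1,...,n} is a sequence of integers: the entry
   Posz x stands for +x and - Posz x for -x. *)
Definition signed_perm (n : nat) (P : seq int) : Prop :=
  perm_eq (map absz P) (iota 1 n).

Definition id_sperm (n : nat) : seq int := map Posz (iota 1 n).

Definition good_family (n : nat) (Ps : seq (seq int)) : Prop :=
  2 <= n /\ head [::] Ps = id_sperm n /\ Ps != [::] /\
  forall P, P \in Ps ->
    [/\ signed_perm n P, head 0%R P = Posz 1 & last 0%R P = Posz n].

(* (a..c) = {a,...,c} occupies consecutive positions i..i+c-a of P
   (ignoring signs) with +a at the left end and +c at the right end, or
   -c at the left end and -a at the right end. *)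
Definition conserved_in (P : seq int) (a c : nat) : Prop :=
  exists i, let m := (c - a).+1 in
    [/\ i + m <= size P,
        perm_eq (map absz (take m (drop i P))) (iota a m) &
        (nth 0%R P i = Posz a /\ nth 0%R P (i + m).-1 = Posz c) \/
        (nth 0%R P i = (- Posz c)%R /\ nth 0%R P (i + m).-1 = (- Posz a)%R)].

Definition conserved (n : nat) (Ps : seq (seq int)) (a c : nat) : Prop :=
  (a = c /\ 1 <= a <= n) \/
  (a < c /\ forall P, P \in Ps -> conserved_in P a c).

Definition frontier_set (n : nat) (Ps : seq (seq int)) (a c : nat)
    (S : seq nat) : Prop :=
  [/\ a \in S, c \in S, (forall x, x \in S -> a <= x <= c) &
      forall x y, x \in S -> y \in S -> x < y -> conserved n Ps x y].

Definition in_maxF (n : nat) (Ps : seq (seq int)) (a c x : nat) : Prop :=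
  exists S, frontier_set n Ps a c S /\ x \in S.

(* Main.v *)
Require Import Defs.
From mathcomp Require Import all_boot all_order all_algebra.
From mathcomp Require Import zify.
Set Implicit Arguments. Unset Strict Implicit.

Lemma mem_window (u : seq nat) i k y : uniq u ->
  (y \in take k (drop i u)) = (y \in u) && (i <= index y u < i + k).
Proof.
move=> Uu; apply/idP/idP.
- move=> /(nthP 0) [j]; rewrite size_take_min size_drop leq_min => /andP[Hjk Hj] <-.
  rewrite nth_take // nth_drop index_uniq //; last by lia.
  by rewrite mem_nth /= -?ltn_subRL //; lia.
- move=> /andP [yu /andP [h1 h2]].
  have -> : y = nth 0 (take k (drop i u)) (index y u - i).
    rewrite nth_take; last by lia.
    by rewrite nth_drop subnKC // nth_index.
  apply: mem_nth; rewrite size_take_min size_drop leq_min.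
  have := index_mem y u; rewrite yu; lia.
Qed.

Definition CB (P : seq int) (a c lo hi : nat) (o : bool) :=
  [/\ lo <= hi, hi < size P,
      (forall y, (y \in map absz P) && (lo <= index y (map absz P) <= hi) = (a <= y <= c)),
      (if o then (index a (map absz P) = lo /\ index c (map absz P) = hi)
            else (index c (map absz P) = lo /\ index a (map absz P) = hi)) &
      (if o then (nth 0%R P lo = Posz a /\ nth 0%R P hi = Posz c)
            else (nth 0%R P lo = (- Posz c)%R /\ nth 0%R P hi = (- Posz a)%R))].

Lemma idx_of (P : seq int) i x z : uniq (map absz P) -> i < size P ->
  nth 0%R P i = z -> absz z = x -> index x (map absz P) = i.
Proof.
move=> U Hi Hn Hz; have <- : nth 0 (map absz P) i = x by rewrite (nth_map 0%R) // Hn.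
by rewrite index_uniq // size_map.
Qed.

Lemma cons_to_CB P a c : uniq (map absz P) -> a <= c -> conserved_in P a c ->
  exists lo hi o, CB P a c lo hi o.
Proof.
move=> U ac [i [Hs Hp Ho]].
have Hs' : i + (c - a) < size P by rewrite addnS in Hs.
have E : (i + (c - a).+1).-1 = i + (c - a) by rewrite addnS.
rewrite E in Ho.
have Bl : forall y, (y \in map absz P) && (i <= index y (map absz P) <= i + (c - a)) = (a <= y <= c).
  move=> y; have -> : (i <= index y (map absz P) <= i + (c - a)) =
     (i <= index y (map absz P) < i + (c - a).+1) by rewrite addnS ltnS.
  rewrite -mem_window // -map_drop -map_take (perm_mem Hp) mem_iota; lia.
case: Ho => [[H1 H2]|[H1 H2]].
- exists i, (i + (c - a)), true; split => //; first lia.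
  by split; [eapply idx_of; [exact U| |exact H1|]|eapply idx_of; [exact U| |exact H2|]]; rewrite ?abszN //; lia.
- exists i, (i + (c - a)), false; split => //; first lia.
  by split; [eapply idx_of; [exact U| |exact H1|]|eapply idx_of; [exact U| |exact H2|]]; rewrite ?abszN //; lia.
Qed.

Lemma CB_to_cons P a c lo hi o : uniq (map absz P) -> a <= c -> CB P a c lo hi o ->
  conserved_in P a c.
Proof.
move=> U ac [l1 l2 Bl Hi Hs].
have Hp : perm_eq (take (hi - lo).+1 (drop lo (map absz P))) (iota a (c - a).+1).
  apply: uniq_perm; first by rewrite take_uniq // drop_uniq.
    exact: iota_uniq.
  move=> y; rewrite mem_window // mem_iota.
  have -> : (lo <= index y (map absz P) < lo + (hi - lo).+1) =
     (lo <= index y (map absz P) <= hi) by rewrite addnS ltnS subnKC.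
  rewrite Bl; lia.
have Hsz := perm_size Hp.
rewrite size_take size_drop size_iota size_map in Hsz.
have Ehl : hi - lo = c - a.
  move: Hsz; case: ifP => Hc Hsz; clear -Hsz Hc l1 l2; lia.
exists lo; split.
- lia.
- by rewrite map_take map_drop; rewrite Ehl in Hp.
- have E : (lo + (c - a).+1).-1 = hi by rewrite addnS /=; lia.
  rewrite E; case: o Hs {Hi} => [[-> ->]|[-> ->]]; by [left|right].
Qed.

Lemma idx_inj (u : seq nat) x y : x \in u -> y \in u -> index x u = index y u -> x = y.
Proof. by move=> xu yu E; rewrite -(nth_index 0 xu) -(nth_index 0 yu) E. Qed.

Lemma Gp P u1 v1 u2 v2 : uniq (map absz P) -> u1 <= u2 -> u2 < v1 -> v1 <= v2 ->
  conserved_in P u1 v1 -> conserved_in P u2 v2 ->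
  [/\ u1 < u2 -> conserved_in P u1 u2, conserved_in P u2 v1 &
      v1 < v2 -> conserved_in P v1 v2].
Proof.
move=> U h12 h21 h22 C1 C2.
have [l1 [h1 [o1 [L1 S1 B1 I1 G1]]]] := @cons_to_CB P u1 v1 U (ltnW (leq_ltn_trans h12 h21)) C1.
have [l2 [h2 [o2 [L2 S2 B2 I2 G2]]]] := @cons_to_CB P u2 v2 U (ltnW (leq_trans h21 h22)) C2.
set u := map absz P in B1 B2 I1 I2 U.
have M1 : u1 \in u by have := B1 u1; case: (u1 \in u) => //=; lia.
have M2 : v1 \in u by have := B1 v1; case: (v1 \in u) => //=; lia.
have M3 : u2 \in u by have := B2 u2; case: (u2 \in u) => //=; lia.
have M4 : v2 \in u by have := B2 v2; case: (v2 \in u) => //=; lia.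
have P1 : l1 <= index u2 u <= h1 by have := B1 u2; rewrite M3 /= => ->; lia.
have P2 : l2 <= index v1 u <= h2 by have := B2 v1; rewrite M2 /= => ->; lia.
have J4 := idx_inj M2 M3.
case: o1 I1 G1 => -[I1a I1b] [G1a G1b]; case: o2 I2 G2 => -[I2a I2b] [G2a G2b].
- rewrite I2a in P1; rewrite I1b in P2; rewrite I1b I2a in J4.
  split.
  + move=> lt; apply: (@CB_to_cons P u1 u2 l1 l2 true U); [lia|split].
    * lia.
    * lia.
    * rewrite -/u; move=> y; have K1 := B1 y; have K2 := B2 y.
      case yu: (y \in u) in K1 K2 *; rewrite /= in K1 K2 *; last lia.
      have J := idx_inj yu M3; rewrite I2a in J.
      have J' : y = u2 -> index y u = l2 by move->.
      clear -K1 K2 J J' P1 P2 lt h12 h21 h22 L1 L2; lia.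
    * by rewrite I1a I2a.
    * by rewrite -I1a -I2a I1a G1a I2a G2a.
  + apply: (@CB_to_cons P u2 v1 l2 h1 true U); [lia|split].
    * lia.
    * lia.
    * rewrite -/u; move=> y; have K1 := B1 y; have K2 := B2 y.
      case yu: (y \in u) in K1 K2 *; rewrite /= in K1 K2 *; lia.
    * by rewrite I2a I1b.
    * by [].
  + move=> lt; apply: (@CB_to_cons P v1 v2 h1 h2 true U); [lia|split].
    * lia.
    * lia.
    * rewrite -/u; move=> y; have K1 := B1 y; have K2 := B2 y.
      case yu: (y \in u) in K1 K2 *; rewrite /= in K1 K2 *; last lia.
      have J := idx_inj yu M2; rewrite I1b in J.
      have J' : y = v1 -> index y u = h1 by move->.
      clear -K1 K2 J J' P1 P2 lt h12 h21 h22 L1 L2; lia.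
    * by rewrite I1b I2b.
    * by [].
- exfalso; rewrite I1b I2b in P1 P2 J4; lia.
- exfalso; rewrite I1a I2a in P1 P2 J4; lia.
- rewrite I2b in P1; rewrite I1a in P2; rewrite I1a I2b in J4.
  split.
  + move=> lt; apply: (@CB_to_cons P u1 u2 h2 h1 false U); [lia|split].
    * lia.
    * lia.
    * rewrite -/u; move=> y; have K1 := B1 y; have K2 := B2 y.
      case yu: (y \in u) in K1 K2 *; rewrite /= in K1 K2 *; last lia.
      have J := idx_inj yu M3; rewrite I2b in J.
      have J' : y = u2 -> index y u = h2 by move->.
      clear -K1 K2 J J' P1 P2 lt h12 h21 h22 L1 L2; lia.
    * by rewrite I1b I2b.
    * by [].
  + apply: (@CB_to_cons P u2 v1 l1 h2 false U); [lia|split].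
    * lia.
    * lia.
    * rewrite -/u; move=> y; have K1 := B1 y; have K2 := B2 y.
      case yu: (y \in u) in K1 K2 *; rewrite /= in K1 K2 *; lia.
    * by rewrite I2b I1a.
    * by [].
  + move=> lt; apply: (@CB_to_cons P v1 v2 l2 l1 false U); [lia|split].
    * lia.
    * lia.
    * rewrite -/u; move=> y; have K1 := B1 y; have K2 := B2 y.
      case yu: (y \in u) in K1 K2 *; rewrite /= in K1 K2 *; last lia.
      have J := idx_inj yu M2; rewrite I1a in J.
      have J' : y = v1 -> index y u = l1 by move->.
      clear -K1 K2 J J' P1 P2 lt h12 h21 h22 L1 L2; lia.
    * by rewrite I1a I2a.
    * by [].
Qed.

Lemma Cp P a b c : uniq (map absz P) -> a < b -> b < c ->
  conserved_in P a b -> conserved_in P b c -> conserved_in P a c.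
Proof.
move=> U ab bc C1 C2.
have [l1 [h1 [o1 [L1 S1 B1 I1 G1]]]] := @cons_to_CB P a b U (ltnW ab) C1.
have [l2 [h2 [o2 [L2 S2 B2 I2 G2]]]] := @cons_to_CB P b c U (ltnW bc) C2.
set u := map absz P in B1 B2 I1 I2 U.
have Mc : c \in u by have := B2 c; case: (c \in u) => //=; lia.
have Ma : a \in u by have := B1 a; case: (a \in u) => //=; lia.
have Q1 : (l1 <= index c u <= h1) = false by have := B1 c; rewrite Mc /= => ->; lia.
have Q2 : (l2 <= index a u <= h2) = false by have := B2 a; rewrite Ma /= => ->; lia.
case: o1 I1 G1 => -[I1a I1b] [G1a G1b]; case: o2 I2 G2 => -[I2a I2b] [G2a G2b].
- have E : h1 = l2 by rewrite -I1b -I2a.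
  apply: (@CB_to_cons P a c l1 h2 true U); [lia|split].
  + lia.
  + lia.
  + rewrite -/u; move=> y; have K1 := B1 y; have K2 := B2 y.
    case yu: (y \in u) in K1 K2 *; rewrite /= in K1 K2 *; lia.
  + by rewrite I1a I2b.
  + by [].
- exfalso; have E : h1 = h2 by rewrite -I1b -I2b.
  rewrite I2a in Q1; rewrite I1a in Q2; lia.
- exfalso; have E : l1 = l2 by rewrite -I1a -I2a.
  rewrite I2b in Q1; rewrite I1b in Q2; lia.
- have E : l1 = h2 by rewrite -I1a -I2b.
  apply: (@CB_to_cons P a c l2 h1 false U); [lia|split].
  + lia.
  + lia.
  + rewrite -/u; move=> y; have K1 := B1 y; have K2 := B2 y.
    case yu: (y \in u) in K1 K2 *; rewrite /= in K1 K2 *; lia.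
  + by rewrite I1b I2a.
  + by [].
Qed.

Lemma fam_uniq n Ps P : good_family n Ps -> P \in Ps -> uniq (map absz P).
Proof.
move=> [_ [_ [_ H]]] PP; have [sp _ _] := H P PP.
by rewrite /signed_perm in sp; rewrite (perm_uniq sp) iota_uniq.
Qed.

Lemma consP n Ps x y : x < y -> conserved n Ps x y -> forall P, P \in Ps -> conserved_in P x y.
Proof. by move=> xy [[E _]|[_ H]] //; move: xy; rewrite E ltnn. Qed.

Lemma GF n Ps u1 v1 u2 v2 : good_family n Ps -> u1 <= u2 -> u2 < v1 -> v1 <= v2 ->
  conserved n Ps u1 v1 -> conserved n Ps u2 v2 ->
  [/\ u1 < u2 -> conserved n Ps u1 u2, conserved n Ps u2 v1 &
      v1 < v2 -> conserved n Ps v1 v2].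
Proof.
move=> G h12 h21 h22 C1 C2.
have H1 := consP (leq_ltn_trans h12 h21) C1.
have H2 := consP (leq_trans h21 h22) C2.
have K : forall P, P \in Ps -> _ := fun P PP =>
  Gp (fam_uniq G PP) h12 h21 h22 (H1 P PP) (H2 P PP).
split.
- move=> lt; right; split => // P PP; by case: (K P PP) => /(_ lt).
- right; split => // P PP; by case: (K P PP).
- move=> lt; right; split => // P PP; by case: (K P PP) => _ _ /(_ lt).
Qed.

Lemma CF n Ps a b c : good_family n Ps -> a < b -> b < c ->
  conserved n Ps a b -> conserved n Ps b c -> conserved n Ps a c.
Proof.
move=> G ab bc C1 C2; right; split; first exact: ltn_trans ab bc.
move=> P PP; exact: (Cp (fam_uniq G PP) ab bc (consP ab C1 PP) (consP bc C2 PP)).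
Qed.

Lemma sorted_le (F : seq nat) i j : sorted ltn F -> i <= j -> j < size F ->
  nth 0 F i <= nth 0 F j.
Proof.
move=> S; rewrite leq_eqVlt => /orP[/eqP->//|ij] js.
apply: ltnW; apply: (sorted_ltn_nth ltn_trans 0 S) => //.
  by rewrite inE (ltn_trans ij js).
Qed.

Lemma index_mono (F : seq nat) x y : sorted ltn F -> x \in F -> y \in F -> x <= y ->
  index x F <= index y F.
Proof.
move=> S xF yF xy; rewrite leqNgt; apply/negP => lt.
have xs : index x F < size F by rewrite index_mem.
have := sorted_le S (ltnW lt) xs; rewrite !nth_index // => yx.
have E : x = y by apply/eqP; rewrite eqn_leq xy yx.
by move: lt; rewrite E ltnn.
Qed.

Theorem lemma9 (n : nat) (Ps : seq (seq int)) (a0 c0 : nat) (F : seq nat)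
    (a c : nat) :
  good_family n Ps ->
  conserved n Ps a0 c0 ->
  sorted ltn F ->
  (forall x, x \in F <-> in_maxF n Ps a0 c0 x) ->
  conserved n Ps a c ->
  a0 <= a -> c <= c0 ->
  ((exists l, l \in F /\ a <= l <= c) /\
     exists i j, [/\ i <= j, j < size F, a = nth 0 F i & c = nth 0 F j])
  \/
  ((forall l, l \in F -> ~~ (a <= l <= c)) /\
     exists i, i.+1 < size F /\ nth 0 F i < a /\ c < nth 0 F i.+1).
Proof.
move=> G C0 So HF Cac Ha0 Hc0.
have a0c0 : a0 <= c0 by case: C0 => [[-> _]|[/ltnW]].
have ac : a <= c by case: Cac => [[-> _]|[/ltnW]].
have FS0 : frontier_set n Ps a0 c0 [:: a0; c0].
  split; rewrite ?inE ?eqxx ?orbT //.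
  - by move=> x; rewrite !inE => /orP[/eqP->|/eqP->]; rewrite ?leqnn ?a0c0.
  - move=> x y; rewrite !inE => /orP[/eqP->|/eqP->] /orP[/eqP->|/eqP->] //;
      rewrite ?ltnn //; lia.
have a0F : a0 \in F by apply/HF; exists [:: a0; c0]; rewrite inE eqxx.
have c0F : c0 \in F by apply/HF; exists [:: a0; c0]; rewrite !inE eqxx orbT.
case: (boolP (has (fun l => a <= l <= c) F)) => [/hasP [l lF hl]|/hasPn hn].
- left; split; first by exists l.
  have [S0 [[a0S c0S Sr Sc] lS]] := (HF l).1 lF.
  have aF : a \in F.
    apply/HF; case: (boolP (a \in S0)) => aS; first by exists S0.
    have a0a : a0 < a by rewrite ltn_neqAle Ha0 andbT; apply/eqP => E; rewrite -E a0S in aS.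
    have al : a < l by rewrite ltn_neqAle (andP hl).1 andbT; apply/eqP => E; rewrite E lS in aS.
    have lc : l <= c := (andP hl).2.
    have aY : forall y, y \in S0 -> a < y -> conserved n Ps a y.
      move=> y yS ay; case: (leqP y c) => yc.
      + by case: (GF G (ltnW a0a) ay yc (Sc _ _ a0S yS (ltn_trans a0a ay)) Cac).
      + have [_ Cal _] := GF G (ltnW a0a) al lc (Sc _ _ a0S lS (ltn_trans a0a al)) Cac.
        apply: (CF G al (leq_ltn_trans lc yc) Cal).
        exact: Sc _ _ lS yS (leq_ltn_trans lc yc).
    have Xa : forall x, x \in S0 -> x < a -> conserved n Ps x a.
      move=> x xS xa.
      have [K _ _] := GF G (ltnW xa) al lc (Sc _ _ xS lS (ltn_trans xa al)) Cac.
      exact: K.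
    exists (a :: S0); split; last by rewrite inE eqxx.
    split; rewrite ?inE ?a0S ?c0S ?orbT //.
    + move=> x; rewrite inE => /orP[/eqP->|/Sr //]; lia.
    + move=> x y; rewrite !inE => /orP[/eqP->|xS] /orP[/eqP->|yS] xy.
      * by rewrite ltnn in xy.
      * exact: aY.
      * exact: Xa.
      * exact: Sc.
  have cF : c \in F.
    apply/HF; case: (boolP (c \in S0)) => cS; first by exists S0.
    have cc0 : c < c0 by rewrite ltn_neqAle Hc0 andbT; apply/eqP => E; rewrite E c0S in cS.
    have lc : l < c by rewrite ltn_neqAle (andP hl).2 andbT; apply/eqP => E; rewrite -E lS in cS.
    have al : a <= l := (andP hl).1.
    have cY : forall y, y \in S0 -> c < y -> conserved n Ps c y.
      move=> y yS cy.
      have [_ _ K] := GF G al lc (ltnW cy) Cac (Sc _ _ lS yS (ltn_trans lc cy)).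
      exact: K.
    have Xc : forall x, x \in S0 -> x < c -> conserved n Ps x c.
      move=> x xS xc; case: (leqP a x) => ax.
      + by case: (GF G ax xc (ltnW cc0) Cac (Sc _ _ xS c0S (ltn_trans xc cc0))).
      + have [_ Clc _] := GF G al lc (ltnW cc0) Cac (Sc _ _ lS c0S (ltn_trans lc cc0)).
        apply: (CF G (leq_trans ax al) lc _ Clc).
        exact: Sc _ _ xS lS (leq_trans ax al).
    exists (c :: S0); split; last by rewrite inE eqxx.
    split; rewrite ?inE ?a0S ?c0S ?orbT //.
    + move=> x; rewrite inE => /orP[/eqP->|/Sr //]; lia.
    + move=> x y; rewrite !inE => /orP[/eqP->|xS] /orP[/eqP->|yS] xy.
      * by rewrite ltnn in xy.
      * exact: cY.
      * exact: Xc.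
      * exact: Sc.
  exists (index a F), (index c F); split.
  + exact: index_mono.
  + by rewrite index_mem.
  + by rewrite nth_index.
  + by rewrite nth_index.
- right; split => //.
  set k := find (fun x => a <= x) F.
  have hs : has (fun x => a <= x) F by apply/hasP; exists c0 => //; lia.
  have ks : k < size F by rewrite -has_find.
  have ak : a <= nth 0 F k := nth_find 0 hs.
  have ck : c < nth 0 F k.
    have := hn _ (mem_nth 0 ks); rewrite ak /= -ltnNge //.
  have a0a : a0 < a by have := hn _ a0F; lia.
  have k0 : 0 < k.
    rewrite lt0n; apply/negP => /eqP k0.
    have xs : index a0 F < size F by rewrite index_mem.
    have := sorted_le So (leq0n (index a0 F)) xs; rewrite nth_index //; rewrite k0 in ak; lia.
  exists k.-1; rewrite prednK //; split => //; split => //.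
  have kk : k.-1 < k by lia.
  have := before_find 0 kk.
  by move=> /negbT; rewrite -ltnNge.
Qed.
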